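(* Let $f:\Omega_D\to\mathbb{O}$ be the $O(3)$-slice function induced by an $O(3)$-stem function $\mathcal F:E\to\mathbb{O}^4$ of class $C^1$. Then $f$ is slice Fueter-regular if and only if there exists at least one $\mathbb{I}=(I,J)\in\mathcal N$ such that $\overline{\mathcal D}_{\mathbb I}f=0$ on $\Omega_{\mathbb I}$.
   Context: Octonions $\mathbb{O}=\mathbb{H}+\ell\mathbb{H}$ (product $(a+\ell b)(c+\ell d)=(ac-d\bar b)+\ell(\bar a d+cb)$), identified with $\mathbb{R}^8$; $\mathbb{S}=\{I:I^2=-1\}$. $D\subset\mathbb{R}^2$ non-empty open, invariant under $(x_0,x_1)\mapsto(x_0,-x_1)$, $\Omega_D=\{x_0+x_1I:(x_0,x_1)\in D,I\in\mathbb{S}\}$, assumed connected; $E=\{(x_0,\dots,x_3)\in\mathbb{R}^4:(x_0,(x_1^2+x_2^2+x_3^2)^{1/2})\in D\}$. $O(3)$: real orthogonal $4\times4$ matrices fixing the first basis vector, acting on $\mathbb{R}^4$, $\mathbb{O}^4$ by matrix–column multiplication. $\mathcal N=\{(I,J)\in\mathbb{S}^2:I\perp J\}$. An $O(3)$-stem function is $\mathcal F=(\mathcal F_0,\dots,\mathcal F_3):E\to\mathbb{O}^4$ with $\mathcal F(Av)=A\mathcal F(v)$; it induces the well-defined function $f(x_0+x_1I+x_2J+x_3(IJ))=\mathcal F_0(v)+I\mathcal F_1(v)+J\mathcal F_2(v)+(IJ)\mathcal F_3(v)$ ($v=(x_0,\dots,x_3)\in E$, $(I,J)\in\mathcal N$).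 $f$ is slice Fueter-regular if it is induced by such an $\mathcal F$ of class $C^1$ satisfying on $E$: $\partial_0\mathcal F_0-\partial_1\mathcal F_1-\partial_2\mathcal F_2-\partial_3\mathcal F_3=0$, $\partial_1\mathcal F_0+\partial_0\mathcal F_1-\partial_3\mathcal F_2+\partial_2\mathcal F_3=0$, $\partial_2\mathcal F_0+\partial_3\mathcal F_1+\partial_0\mathcal F_2-\partial_1\mathcal F_3=0$, $\partial_3\mathcal F_0-\partial_2\mathcal F_1+\partial_1\mathcal F_2+\partial_0\mathcal F_3=0$. For $\mathbb I=(I,J)\in\mathcal N$: $\mathbb{H}_{\mathbb I}=\mathrm{Span}_{\mathbb{R}}(1,I,J,IJ)$, $\Omega_{\mathbb I}=\Omega_D\cap\mathbb{H}_{\mathbb I}$, $f_{\mathbb I}(v)=f(x_0+x_1I+x_2J+x_3IJ)$ for $v\in E$, and $\overline{\mathcal D}_{\mathbb I}f(x)=\frac{\partial f_{\mathbb I}}{\partial x_0}(v)+I\frac{\partial f_{\mathbb I}}{\partial x_1}(v)+J\frac{\partial f_{\mathbb I}}{\partial x_2}(v)+(IJ)\frac{\partial f_{\mathbb I}}{\partial x_3}(v)$ where $x=x_0+x_1I+x_2J+x_3IJ$. *)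

(* Defs.v *)
From HB Require Import structures.
From mathcomp Require Import all_boot all_order all_algebra.
From mathcomp Require Import all_classical all_reals all_analysis.
Set Implicit Arguments. Unset Strict Implicit. Unset Printing Implicit Defensive.
Import Order.TTheory GRing.Theory Num.Theory.
Import numFieldNormedType.Exports.
Local Open Scope classical_set_scope.
Local Open Scope ring_scope.

Section Octonions.
Variable R : realType.

Definition i0 : 'I_4 := @Ordinal 4 0 isT.
Definition i1 : 'I_4 := @Ordinal 4 1 isT.
Definition i2 : 'I_4 := @Ordinal 4 2 isT.
Definition i3 : 'I_4 := @Ordinal 4 3 isT.

(* Quaternions H = R^4 as row vectors, basis 1, i, j, k *)
Definition quat := 'rV[R]_4.
Definition mkq (a b c d : R) : quat := \row_(k < 4) [:: a; b; c; d]`_k.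
Definition qc (p : quat) (k : 'I_4) : R := p ord0 k.
Definition qmul (p q : quat) : quat :=
  mkq (qc p i0 * qc q i0 - qc p i1 * qc q i1 - qc p i2 * qc q i2 - qc p i3 * qc q i3)
      (qc p i0 * qc q i1 + qc p i1 * qc q i0 + qc p i2 * qc q i3 - qc p i3 * qc q i2)
      (qc p i0 * qc q i2 - qc p i1 * qc q i3 + qc p i2 * qc q i0 + qc p i3 * qc q i1)
      (qc p i0 * qc q i3 + qc p i1 * qc q i2 - qc p i2 * qc q i1 + qc p i3 * qc q i0).
Definition qconj (p : quat) : quat := mkq (qc p i0) (- qc p i1) (- qc p i2) (- qc p i3).

(* Octonions O = H + l H identified with R^8 = 'rV_8: the first four
   coordinates are the quaternion a, the last four the quaternion b of a + l b *)
Definition oct := 'rV[R]_8.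
Definition opart1 (x : oct) : quat := @lsubmx R 1 4 4 x.
Definition opart2 (x : oct) : quat := @rsubmx R 1 4 4 x.
Definition mko (a b : quat) : oct := @row_mx R 1 4 4 a b.
(* (a + l b)(c + l d) = (ac - d conj(b)) + l (conj(a) d + c b) *)
Definition omul (x y : oct) : oct :=
  mko (qmul (opart1 x) (opart1 y) - qmul (opart2 y) (qconj (opart2 x)))
      (qmul (qconj (opart1 x)) (opart2 y) + qmul (opart1 y) (opart2 x)).
Definition oone : oct := mko (mkq 1 0 0 0) 0.

Definition odot (x y : oct) : R := \sum_(k < 8) x ord0 k * y ord0 k.

Definition Ssph : set oct := [set I | omul I I = - oone].
Definition Npairs (I J : oct) : Prop := Ssph I /\ Ssph J /\ odot I J = 0.

Definition OmegaD (D : set (R * R)) : set oct :=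
  [set x | exists a b I, D (a, b) /\ Ssph I /\ x = a *: oone + b *: I].

Definition vc (v : 'cV[R]_4) (k : 'I_4) : R := v k ord0.

Definition Eset (D : set (R * R)) : set 'cV[R]_4 :=
  [set v | D (vc v i0, Num.sqrt (vc v i1 ^+ 2 + vc v i2 ^+ 2 + vc v i3 ^+ 2))].

Definition e4 (k : 'I_4) : 'cV[R]_4 := delta_mx k ord0.
Definition isO3 (A : 'M[R]_4) : Prop := A^T *m A = 1%:M /\ A *m e4 i0 = e4 i0.

Definition emb (I J : oct) (v : 'cV[R]_4) : oct :=
  vc v i0 *: oone + vc v i1 *: I + vc v i2 *: J + vc v i3 *: omul I J.

Definition pd (V : normedModType R) (k : 'I_4) (G : 'cV[R]_4 -> V) (v : 'cV[R]_4) : V :=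
  'D_(e4 k) G v.

(* An element of O^4 is a 4x8 real matrix whose k-th row is the k-th octonion
   component; the matrix A acts on O^4 by matrix-column multiplication A *m _. *)
Definition Fc (F : 'cV[R]_4 -> 'M[R]_(4, 8)) (k : 'I_4) (v : 'cV[R]_4) : oct := row k (F v).

Definition stem_fun (D : set (R * R)) (F : 'cV[R]_4 -> 'M[R]_(4, 8)) : Prop :=
  forall A v, isO3 A -> Eset D v -> F (A *m v) = A *m F v.

Definition C1_on (D : set (R * R)) (F : 'cV[R]_4 -> 'M[R]_(4, 8)) : Prop :=
  (forall v, Eset D v -> differentiable F v) /\
  (forall k v, Eset D v -> {for v, continuous (pd k F)}).

Definition induces (D : set (R * R)) (F : 'cV[R]_4 -> 'M[R]_(4, 8)) (f : oct -> oct) : Prop :=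
  forall I J v, Npairs I J -> Eset D v ->
    f (emb I J v) = Fc F i0 v + omul I (Fc F i1 v) + omul J (Fc F i2 v)
                    + omul (omul I J) (Fc F i3 v).

Definition fueter_system (D : set (R * R)) (F : 'cV[R]_4 -> 'M[R]_(4, 8)) : Prop :=
  forall v, Eset D v ->
    let d a b := row b (pd a F v) in
    d i0 i0 - d i1 i1 - d i2 i2 - d i3 i3 = 0 /\
    d i1 i0 + d i0 i1 - d i3 i2 + d i2 i3 = 0 /\
    d i2 i0 + d i3 i1 + d i0 i2 - d i1 i3 = 0 /\
    d i3 i0 - d i2 i1 + d i1 i2 + d i0 i3 = 0.

Definition slice_fueter_regular (D : set (R * R)) (f : oct -> oct) : Prop :=
  exists F, stem_fun D F /\ C1_on D F /\ induces D F f /\ fueter_system D F.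

Definition fI (I J : oct) (f : oct -> oct) (v : 'cV[R]_4) : oct := f (emb I J v).
Definition Dbar (I J : oct) (f : oct -> oct) (v : 'cV[R]_4) : oct :=
  pd i0 (fI I J f) v + omul I (pd i1 (fI I J f) v) + omul J (pd i2 (fI I J f) v)
  + omul (omul I J) (pd i3 (fI I J f) v).

End Octonions.

(* Main.v *)
Set Warnings "-notation-overridden,-ambiguous-paths,-notation-incompatible-prefix,-redundant-canonical-projection".
Require Import Defs.
From HB Require Import structures.
From mathcomp Require Import all_boot all_order all_algebra.
From mathcomp Require Import all_classical all_reals all_analysis.
From mathcomp Require Import ring lra.
Import Order.TTheory GRing.Theory Num.Theory.
Import numFieldNormedType.Exports.
Local Open Scope classical_set_scope.
Local Open Scope ring_scope.

Module Aux.
Set Implicit Arguments. Unset Strict Implicit. Unset Printing Implicit Defensive.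


Section Alg.
Variable R : realType.
Implicit Types x y z : oct R.

Definition cx (x : oct R) (n : nat) : R := x ord0 (inord n).
Lemma oE x (k : 'I_8) : x ord0 k = cx x k.
Proof. by rewrite /cx inord_val. Qed.

Lemma cx_mko (a b : quat R) n : (n < 8)%N ->
  cx (mko a b) n = if (n < 4)%N then a ord0 (inord n) else b ord0 (inord (n - 4)).
Proof.
move=> Hn; rewrite /cx /mko mxE; case: splitP => j /=; rewrite inordK // => ->.
  by rewrite ltn_ord inord_val.
by rewrite ltnNge leq_addr /= addKn inord_val.
Qed.

Lemma qc_op1 x (i : 'I_4) : qc (opart1 x) i = cx x i.
Proof. by rewrite /qc /opart1 mxE oE. Qed.
Lemma qc_op2 x (i : 'I_4) : qc (opart2 x) i = cx x i.+4.
Proof. by rewrite /qc /opart2 mxE oE. Qed.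
Lemma mkqE (a b c d : R) n : (n < 4)%N -> (mkq a b c d) ord0 (inord n) = [:: a; b; c; d]`_n.
Proof. by move=> Hn; rewrite /mkq mxE inordK. Qed.
Lemma qc_mkq (a b c d : R) (i : 'I_4) : qc (mkq a b c d) i = [:: a; b; c; d]`_i.
Proof. by rewrite /qc /mkq mxE. Qed.
Lemma qE (p : quat R) n : p ord0 (inord n) = qc p (inord n). Proof. by []. Qed.

Lemma qcD (p q : quat R) i : qc (p + q) i = qc p i + qc q i. Proof. by rewrite /qc mxE. Qed.
Lemma qcB (p q : quat R) i : qc (p - q) i = qc p i - qc q i. Proof. by rewrite /qc !mxE. Qed.
Lemma qcN (p : quat R) i : qc (- p) i = - qc p i. Proof. by rewrite /qc !mxE. Qed.
Lemma inord_nat n (Hn : (n < 4)%N) : nat_of_ord (inord n : 'I_4) = n. Proof. by rewrite inordK. Qed.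

Ltac oct_simp := rewrite ?cx_mko //= ?qE ?qcD ?qcB ?qcN /qmul /qconj ?qc_mkq /= ?inord_nat //= ?qc_mkq /= ?qc_op1 ?qc_op2 /=.


Lemma cxD x y n : cx (x + y) n = cx x n + cx y n. Proof. by rewrite /cx mxE. Qed.
Lemma cxN x n : cx (- x) n = - cx x n. Proof. by rewrite /cx mxE. Qed.
Lemma cxZ (a : R) x n : cx (a *: x) n = a * cx x n. Proof. by rewrite /cx mxE. Qed.
Lemma cx0 n : cx (0 : oct R) n = 0. Proof. by rewrite /cx mxE. Qed.
Lemma qc0 i : qc (0 : quat R) i = 0. Proof. by rewrite /qc mxE. Qed.
Lemma odotE x y : odot x y = cx x 0 * cx y 0 + cx x 1 * cx y 1 + cx x 2 * cx y 2 + cx x 3 * cx y 3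
  + cx x 4 * cx y 4 + cx x 5 * cx y 5 + cx x 6 * cx y 6 + cx x 7 * cx y 7.
Proof. by rewrite /odot !big_ord_recr big_ord0 /= !oE /= add0r. Qed.

Ltac oct_simp2 := rewrite /omul /oone; rewrite ?cxD ?cxN ?cxZ ?cx0; oct_simp; rewrite ?qc0 ?cxD ?cxN ?cxZ ?cx0.

Definition OM (n : nat) (a b : nat -> R) : R :=
  match n with
  | 0 => a 0 * b 0 - a 1 * b 1 - a 2 * b 2 - a 3 * b 3 - a 4 * b 4 - a 5 * b 5 - a 6 * b 6 - a 7 * b 7
  | 1 => a 0 * b 1 + a 1 * b 0 + a 2 * b 3 - a 3 * b 2 - a 4 * b 5 + a 5 * b 4 - a 6 * b 7 + a 7 * b 6
  | 2 => a 0 * b 2 - a 1 * b 3 + a 2 * b 0 + a 3 * b 1 - a 4 * b 6 + a 5 * b 7 + a 6 * b 4 - a 7 * b 5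
  | 3 => a 0 * b 3 + a 1 * b 2 - a 2 * b 1 + a 3 * b 0 - a 4 * b 7 - a 5 * b 6 + a 6 * b 5 + a 7 * b 4
  | 4 => a 0 * b 4 + a 1 * b 5 + a 2 * b 6 + a 3 * b 7 + a 4 * b 0 - a 5 * b 1 - a 6 * b 2 - a 7 * b 3
  | 5 => a 0 * b 5 - a 1 * b 4 - a 2 * b 7 + a 3 * b 6 + a 4 * b 1 + a 5 * b 0 - a 6 * b 3 + a 7 * b 2
  | 6 => a 0 * b 6 + a 1 * b 7 - a 2 * b 4 - a 3 * b 5 + a 4 * b 2 + a 5 * b 3 + a 6 * b 0 - a 7 * b 1
  | 7 => a 0 * b 7 - a 1 * b 6 + a 2 * b 5 - a 3 * b 4 + a 4 * b 3 - a 5 * b 2 + a 6 * b 1 + a 7 * b 0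

  | _ => 0 end.

Lemma omul_cx x y n : (n < 8)%N -> cx (omul x y) n = OM n (cx x) (cx y).
Proof.
case: n => [|[|[|[|[|[|[|[|//]]]]]]]] _ /=; do 3? oct_simp2; ring.
Qed.
Lemma cx_oone n : (n < 8)%N -> cx (oone R) n = if n == 0%N then 1 else 0.
Proof.
case: n => [|[|[|[|[|[|[|[|//]]]]]]]] _ /=; do 3? oct_simp2.
Qed.
Arguments cx : simpl never.

Ltac cx_simp := rewrite ?cxD ?cxN ?cxZ ?cx0 ?omul_cx ?cx_oone //; rewrite /OM /=.
Ltac oct_ring := apply/rowP; let k := fresh "k" in intro k; rewrite !oE; case: k => [[|[|[|[|[|[|[|[|//]]]]]]]] Hk] /=;
   do 4? cx_simp; ring.

Lemma omul1 y : omul (oone R) y = y.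
Proof. oct_ring. Qed.
Lemma omulDr x y z : omul x (y + z) = omul x y + omul x z.
Proof. oct_ring. Qed.
Lemma omulZr x (a : R) y : omul x (a *: y) = a *: omul x y.
Proof. oct_ring. Qed.
Lemma omulDl x y z : omul (y + z) x = omul y x + omul z x.
Proof. oct_ring. Qed.
Lemma omulZl x (a : R) y : omul (a *: y) x = a *: omul y x.
Proof. oct_ring. Qed.
Lemma omul_alt x z y : omul x (omul z y) + omul z (omul x y) = omul (omul x z + omul z x) y.
Proof. Time oct_ring. Qed.
Lemma omul_comm x y : omul x y + omul y x =
   (2 * cx x 0) *: y + (2 * cx y 0) *: x - (2 * odot x y) *: oone R.
Proof. rewrite odotE. oct_ring. Qed.
Lemma omul_re x y : cx (omul x y) 0 = 2 * cx x 0 * cx y 0 - odot x y.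
Proof. rewrite odotE. do 3? cx_simp. ring. Qed.
Lemma odot_l x y : odot x (omul x y) = odot x x * cx y 0.
Proof. rewrite !odotE. do 3? cx_simp. ring. Qed.
Lemma odot_r x y : odot (omul x y) y = odot y y * cx x 0.
Proof. rewrite !odotE. do 3? cx_simp. ring. Qed.
Lemma odot_n x y : odot (omul x y) (omul x y) = odot x x * odot y y.
Proof. rewrite !odotE. do 3? cx_simp. Time ring. Qed.

End Alg.


Section Alg2.
Variable R : realType.
Implicit Types x y z : oct R.
Lemma odotC x y : odot x y = odot y x.
Proof. rewrite !odotE; ring. Qed.

Lemma omulNl x y : omul (- x) y = - omul x y.
Proof. by rewrite -scaleN1r omulZl scaleN1r. Qed.
Lemma omulNr x y : omul x (- y) = - omul x y.
Proof. by rewrite -scaleN1r omulZr scaleN1r. Qed.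
Lemma omul0r x : omul x 0 = 0.
Proof. by have := omulZr x 0 0; rewrite !scale0r. Qed.
Lemma omul0l x : omul 0 x = 0.
Proof. by have := omulZl x 0 0; rewrite !scale0r. Qed.
Lemma omulBr x y z : omul x (y - z) = omul x y - omul x z.
Proof. by rewrite omulDr omulNr. Qed.

Lemma LL x w : omul x x = - oone R -> omul x (omul x w) = - w.
Proof.
move=> hx; have := omul_alt x x w; rewrite hx omulDl omulNl omul1 => h.
apply/rowP => k; move/rowP/(_ k): h; rewrite !mxE => h; lra.
Qed.

Lemma anti x y w : omul x y + omul y x = 0 -> omul y (omul x w) = - omul x (omul y w).
Proof.
move=> h; have := omul_alt x y w; rewrite h omul0l => h2.
apply/rowP => k; move/rowP/(_ k): h2; rewrite !mxE => h2; lra.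
Qed.

Lemma linj x w : omul x x = - oone R -> omul x w = 0 -> w = 0.
Proof. by move=> hx hw; have := LL w hx; rewrite hw omul0r => /eqP; rewrite eq_sym oppr_eq0 => /eqP. Qed.

Lemma ssph_prop x : Ssph x -> cx x 0 = 0 /\ odot x x = 1.
Proof.
rewrite /Ssph /= => hx.
have h := omul_comm x x; rewrite hx in h.
have e k : (k < 8)%N -> cx (- oone R + - oone R) k =
   cx ((2 * cx x 0) *: x + (2 * cx x 0) *: x - (2 * odot x x) *: oone R) k by move=> _; rewrite h.
have e0 := e 0%N isT; have e1 := e 1%N isT; have e2 := e 2%N isT; have e3 := e 3%N isT.
have e4' := e 4%N isT; have e5 := e 5%N isT; have e6 := e 6%N isT; have e7 := e 7%N isT.
move: e0 e1 e2 e3 e4' e5 e6 e7; rewrite !cxD !cxN !cxZ !cx_oone //= => e0 e1 e2 e3 e4' e5 e6 e7.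
move: e0; rewrite odotE => e0.
have a0 : cx x 0 = 0.
  set a := cx x 0 in e0 e1 e2 e3 e4' e5 e6 e7 *.
  have hs : cx x 1 ^+ 2 + cx x 2 ^+ 2 + cx x 3 ^+ 2 + cx x 4 ^+ 2 + cx x 5 ^+ 2 + cx x 6 ^+ 2 + cx x 7 ^+ 2 = 1 + a ^+ 2.
    rewrite !expr2; lra.
  have ha : a ^+ 2 * (1 + a ^+ 2) = 0.
    rewrite -hs; apply/eqP; rewrite -subr_eq0; apply/eqP.
    have -> : a ^+ 2 * (cx x 1 ^+ 2 + cx x 2 ^+ 2 + cx x 3 ^+ 2 + cx x 4 ^+ 2 + cx x 5 ^+ 2 + cx x 6 ^+ 2 + cx x 7 ^+ 2) - 0
      = ((a * cx x 1) ^+ 2 + (a * cx x 2) ^+ 2 + (a * cx x 3) ^+ 2 + (a * cx x 4) ^+ 2 + (a * cx x 5) ^+ 2 + (a * cx x 6) ^+ 2 + (a * cx x 7) ^+ 2) by ring.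
    have z k (t : R) : - 0 - 0 = 2 * a * cx x k + 2 * a * cx x k - 2 * t * 0 -> a * cx x k = 0.
      move=> hk; lra.
    move: e1 e2 e3 e4' e5 e6 e7; rewrite !odotE => e1 e2 e3 e4' e5 e6 e7.
    rewrite -/a in e1 e2 e3 e4' e5 e6 e7.
    by rewrite (z _ _ e1) (z _ _ e2) (z _ _ e3) (z _ _ e4') (z _ _ e5) (z _ _ e6) (z _ _ e7) !expr2 !mulr0 !addr0.
  have : a ^+ 2 = 0 by move: ha; nra.
  by move/eqP; rewrite expf_eq0 /= => /eqP.
split => //; rewrite a0 in e0 *; lra.
Qed.

Lemma sq_unit x : cx x 0 = 0 -> odot x x = 1 -> omul x x = - oone R.
Proof.
move=> h0 h1; have := omul_comm x x; rewrite h0 h1 => h.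
apply/rowP => k; move/rowP/(_ k): h; rewrite !mxE => h; lra.
Qed.

Lemma anti_unit x y : cx x 0 = 0 -> cx y 0 = 0 -> odot x y = 0 -> omul x y + omul y x = 0.
Proof.
move=> hx hy hxy; rewrite omul_comm hx hy hxy !mulr0 !scale0r addr0 subr0 //.
Qed.

Lemma Nfacts (I J : oct R) : Npairs I J ->
  [/\ cx I 0 = 0, cx J 0 = 0, cx (omul I J) 0 = 0,
      [/\ odot I I = 1, odot J J = 1 & odot (omul I J) (omul I J) = 1] &
      [/\ odot I J = 0, odot I (omul I J) = 0 & odot J (omul I J) = 0]].
Proof.
move=> [hI [hJ hIJ]]; have [I0 II] := ssph_prop hI; have [J0 JJ] := ssph_prop hJ.
split => //.
- by rewrite omul_re I0 J0 hIJ; ring.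
- by split => //; rewrite odot_n II JJ mulr1.
split => //.
- by rewrite odot_l II J0 mulr0.
- by rewrite odotC odot_r JJ I0 mulr0.
Qed.

Lemma Nalg (I J : oct R) : Npairs I J ->
  [/\ omul I I = - oone R, omul J J = - oone R, omul (omul I J) (omul I J) = - oone R &
     [/\ omul I J + omul J I = 0, omul I (omul I J) + omul (omul I J) I = 0 &
      omul J (omul I J) + omul (omul I J) J = 0]].
Proof.
move=> hN; have [I0 J0 K0 [II JJ KK] [IJ IK JK]] := Nfacts hN.
split; [exact: sq_unit I0 II|exact: sq_unit J0 JJ|exact: sq_unit K0 KK|split].
- exact: anti_unit I0 J0 IJ.
- exact: anti_unit I0 K0 IK.
- exact: anti_unit J0 K0 JK.
Qed.

Lemma odotDl x y z : odot (x + y) z = odot x z + odot y z.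
Proof. rewrite !odotE !cxD; ring. Qed.
Lemma odotDr x y z : odot z (x + y) = odot z x + odot z y.
Proof. rewrite !odotE !cxD; ring. Qed.
Lemma odotZl (a : R) x z : odot (a *: x) z = a * odot x z.
Proof. rewrite !odotE !cxZ; ring. Qed.
Lemma odotZr (a : R) x z : odot z (a *: x) = a * odot z x.
Proof. rewrite !odotE !cxZ; ring. Qed.

Lemma u_facts (I J : oct R) (a b c : R) : Npairs I J ->
  cx (a *: I + b *: J + c *: omul I J) 0 = 0 /\
  odot (a *: I + b *: J + c *: omul I J) (a *: I + b *: J + c *: omul I J) = a ^+ 2 + b ^+ 2 + c ^+ 2.
Proof.
move=> hN; have [I0 J0 K0 [II JJ KK] [IJ IK JK]] := Nfacts hN.
split; first by rewrite !cxD !cxZ I0 J0 K0; ring.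
rewrite !odotDl !odotDr !odotZl !odotZr II JJ KK IJ IK JK (odotC J I) (odotC (omul I J) I) (odotC (omul I J) J) IJ IK JK.
ring.
Qed.

Lemma embE (I J : oct R) v : emb I J v = vc v i0 *: oone R + (vc v i1 *: I + vc v i2 *: J + vc v i3 *: omul I J).
Proof. by rewrite /emb !addrA. Qed.

Lemma emb_Omega (D : set (R * R)) (I J : oct R) v : Npairs I J -> Eset D v -> OmegaD D (emb I J v).
Proof.
move=> hN Ev; have [u0 uu] := u_facts (vc v i1) (vc v i2) (vc v i3) hN.
set u := _ + _ + _ in u0 uu.
set q := vc v i1 ^+ 2 + vc v i2 ^+ 2 + vc v i3 ^+ 2 in uu.
have q0 : 0 <= q by rewrite /q; apply: addr_ge0; [apply: addr_ge0|]; exact: sqr_ge0.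
rewrite embE -/u.
have [r0|rn0] := eqVneq (Num.sqrt q) 0.
  have : q <= 0 by rewrite -sqrtr_eq0 r0.
  move=> qle; have qz : q = 0 by apply/eqP; rewrite eq_le qle q0.
  have hz k : (k = i1 \/ k = i2 \/ k = i3) -> vc v k = 0.
    move=> hk; apply/eqP; rewrite -sqrf_eq0; apply/eqP.
    have := sqr_ge0 (vc v i1); have := sqr_ge0 (vc v i2); have := sqr_ge0 (vc v i3).
    move: qz; rewrite /q; case: hk => [->|[->|->]]; lra.
  have uz : u = 0.
    by rewrite /u (hz i1) ?(hz i2) ?(hz i3) ?scale0r ?addr0 //; auto.
  exists (vc v i0), 0, I; split; first by move: Ev; rewrite /Eset /= -/q qz sqrtr0.
  split; first by case: hN.
  by rewrite uz scale0r.
have rp : 0 < Num.sqrt q by rewrite lt_neqAle eq_sym rn0 sqrtr_ge0.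
exists (vc v i0), (Num.sqrt q), ((Num.sqrt q)^-1 *: u); split => //.
split; last by rewrite scalerA mulfV // scale1r.
apply: sq_unit; first by rewrite cxZ u0 mulr0.
rewrite odotZl odotZr uu -{3}(sqr_sqrtr q0); field; exact: rn0.
Qed.

Lemma Omega_emb (D : set (R * R)) (I J : oct R) v : (forall a b, D (a, b) -> D (a, - b)) ->
  Npairs I J -> OmegaD D (emb I J v) -> Eset D v.
Proof.
move=> Ds hN [a [b [K [Dab [hK he]]]]].
have [u0 uu] := u_facts (vc v i1) (vc v i2) (vc v i3) hN.
have [K0 KK] := ssph_prop hK.
move: he; rewrite embE; set u := _ + _ + _ => he.
have u0' : cx u 0 = 0 by exact: u0.
have uu' : odot u u = vc v i1 ^+ 2 + vc v i2 ^+ 2 + vc v i3 ^+ 2 by exact: uu.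
clearbody u; clear u0 uu; rename u0' into u0; rename uu' into uu.
have ea : vc v i0 = a.
  have := congr1 (fun w : oct R => cx w 0) he; rewrite !cxD !cxZ u0 K0 cx_oone //=; lra.
have ub : u = b *: K.
  by move: he; rewrite ea => /addrI.
rewrite /Eset /= ea; move: uu; rewrite ub odotZl odotZr KK mulr1 -expr2 => <-.
rewrite sqrtr_sqr; have [b0|b0] := leP 0 b; first by rewrite ger0_norm.
by rewrite ltr0_norm //; exact: Ds.
Qed.
End Alg2.


Section Ana.
Variable R : realType.

Lemma linmx_cont m n (W : normedModType R) (f : {linear 'M[R]_(m,n) -> W}) : continuous f.
Proof.
have fE : (f : _ -> _) = \sum_(i < m) \sum_(j < n) (fun M : 'M[R]_(m,n) => M i j *: f (delta_mx i j)).
  apply/funext => M; rewrite !fct_sumE {1}(matrix_sum_delta M) linear_sum.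
  apply: eq_bigr => i _; rewrite fct_sumE linear_sum; apply: eq_bigr => j _.
  by rewrite linearZ.
move=> M; apply: differentiable_continuous; rewrite fE.
apply: differentiable_sum => i; apply: differentiable_sum => j.
apply: differentiableZl; exact: differentiable_coord.
Qed.

Lemma D_lin (V : normedModType R) m n (W : normedModType R)
  (f : {linear 'M[R]_(m,n) -> W}) (G : V -> 'M[R]_(m,n)) x e :
  differentiable G x -> 'D_e (f \o G) x = f ('D_e G x).
Proof.
move=> dG; have cf : continuous f := @linmx_cont _ _ _ f.
have df : forall y, differentiable f y by move=> y; exact: linear_differentiable.
rewrite deriveE; last by apply: differentiable_comp.
by rewrite diff_comp // diff_lin //= deriveE.
Qed.

Lemma Eset_open (D : set (R * R)) : open D -> open (Eset D).
Proof.
move=> Do.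
pose phi := fun v : 'cV[R]_4 => (vc v i0, Num.sqrt (vc v i1 ^+ 2 + vc v i2 ^+ 2 + vc v i3 ^+ 2)).
have -> : Eset D = phi @^-1` D by [].
apply: open_comp => // v _; rewrite /phi.
rewrite /continuous_at.
apply: (@cvg_pair _ _ _ (nbhs v) (nbhs (vc v i0)) (nbhs (Num.sqrt (vc v i1 ^+ 2 + vc v i2 ^+ 2 + vc v i3 ^+ 2)))).
  exact: (@coord_continuous R 4 1 i0 ord0 v).
apply: continuous_comp; last exact: sqrt_continuous.
have FF0 : Filter (nbhs v) by exact: nbhs_filter.
have c k : (fun x : 'cV[R]_4 => vc x k) @ v --> vc v k := @coord_continuous R 4 1 k ord0 v.
have ck k : (fun x : 'cV[R]_4 => vc x k ^+ 2) @ v --> vc v k ^+ 2.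
  by have := cvgM (c k) (c k); apply.
rewrite /prop_for /continuous_at /=.
have FF : Filter (nbhs v) by exact: nbhs_filter.
have H := cvgD (cvgD (ck i1) (ck i2)) (ck i3). exact: (H FF FF).
Qed.

Lemma Eset_nbhs (D : set (R * R)) v : open D -> Eset D v -> nbhs v (Eset D).
Proof. by move=> Do Ev; apply: open_nbhs_nbhs; split => //; exact: Eset_open. Qed.

Definition sg (s1 s2 s3 : R) (k : 'I_4) : R := [:: 1; s1; s2; s3]`_k.
Definition Bs (s1 s2 s3 : R) : 'M[R]_4 := diag_mx (\row_k sg s1 s2 s3 k).
Definition sgok (s : R) := s * s = 1.

Lemma sg2 s1 s2 s3 k : sgok s1 -> sgok s2 -> sgok s3 -> sg s1 s2 s3 k * sg s1 s2 s3 k = 1.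
Proof.
move=> h1 h2 h3; case: k => [[|[|[|[|//]]]] Hk]; rewrite /sg //=; by rewrite mulr1.
Qed.

Lemma BsE s1 s2 s3 m (A : 'M[R]_(4, m)) i j : (Bs s1 s2 s3 *m A) i j = sg s1 s2 s3 i * A i j.
Proof. by rewrite /Bs mul_diag_mx mxE mxE. Qed.

Lemma Bs_isO3 s1 s2 s3 : sgok s1 -> sgok s2 -> sgok s3 -> isO3 (Bs s1 s2 s3).
Proof.
move=> h1 h2 h3; split.
  rewrite /Bs tr_diag_mx; apply/matrixP => i j; rewrite -/(Bs _ _ _) BsE !mxE.
  case: (eqVneq i j) => [->|ne]; last by rewrite mulr0n mulr0.
  by rewrite !mulr1n sg2.
apply/matrixP => i j; rewrite BsE /e4 !mxE.
case: (eqVneq i i0) => [->|ne]; first by rewrite /sg /= mul1r.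
by rewrite /= mulr0.
Qed.

Lemma Bs_e4 s1 s2 s3 (a : 'I_4) : Bs s1 s2 s3 *m e4 R a = sg s1 s2 s3 a *: e4 R a.
Proof.
apply/matrixP => i j; rewrite BsE /e4 !mxE.
by case: (eqVneq i a) => [->|ne]; rewrite ?mulr1 ?mulr0 // (negbTE ne) /= mulr0.
Qed.

Lemma Eset_Bs (D : set (R * R)) s1 s2 s3 v : sgok s1 -> sgok s2 -> sgok s3 ->
  Eset D (Bs s1 s2 s3 *m v) = Eset D v.
Proof.
move=> h1 h2 h3; rewrite /Eset /= /vc !BsE.
have e k : (sg s1 s2 s3 k * v k ord0) ^+ 2 = v k ord0 ^+ 2.
  by rewrite exprMn [X in X * _]expr2 sg2 // mul1r.
by rewrite !e /sg /= mul1r.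
Qed.

Lemma pdB (D : set (R * R)) (G : 'cV[R]_4 -> 'M[R]_(4, 8)) s1 s2 s3 v (a : 'I_4) :
  open D -> stem_fun D G -> sgok s1 -> sgok s2 -> sgok s3 -> Eset D v ->
  differentiable G v -> differentiable G (Bs s1 s2 s3 *m v) ->
  pd a G (Bs s1 s2 s3 *m v) = sg s1 s2 s3 a *: (Bs s1 s2 s3 *m pd a G v).
Proof.
move=> Do hG h1 h2 h3 Ev dv dBv; set B := Bs s1 s2 s3.
have h1' : 'D_(e4 R a) (G \o mulmx B) v = 'D_(B *m e4 R a) G (B *m v).
  rewrite /derive.
  have E : (fun h : R => h^-1 *: (((G \o mulmx B) \o shift v) (h *: e4 R a) - (G \o mulmx B) v)) = (fun h => h^-1 *: ((G \o shift (B *m v)) (h *: (B *m e4 R a)) - G (B *m v))).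
    by apply/funext => h /=; rewrite mulmxDr -scalemxAr.
  by rewrite E.
have h2' : 'D_(e4 R a) (G \o mulmx B) v = 'D_(e4 R a) (mulmx B \o G) v.
  apply: near_eq_derive; have := Eset_nbhs Do Ev; apply: filterS => w Ew /=.
  by apply: hG => //; exact: Bs_isO3.
have h3' : 'D_(e4 R a) (mulmx B \o G) v = B *m 'D_(e4 R a) G v.
  exact: (D_lin (mulmx B : {linear 'M[R]_(4,8) -> 'M[R]_(4,8)})).
have h4' : 'D_(B *m e4 R a) G (B *m v) = sg s1 s2 s3 a *: 'D_(e4 R a) G (B *m v).
  by rewrite Bs_e4 !deriveE // linearZ.
rewrite /pd -h3' -h2' h1' h4' scalerA sg2 // scale1r.
all: reflexivity.
Qed.

End Ana.


Section Main.
Variable R : realType.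

Definition Psi (I J : oct R) (M : 'M[R]_(4, 8)) : oct R :=
  row i0 M + omul I (row i1 M) + omul J (row i2 M) + omul (omul I J) (row i3 M).

Lemma rowDZ (i : 'I_4) (a : R) (M N : 'M[R]_(4,8)) : row i (a *: M + N) = a *: row i M + row i N.
Proof. by apply/rowP => k; rewrite !mxE. Qed.

Lemma Psi_lin (I J : oct R) : linear (Psi I J).
Proof.
move=> a M N; rewrite /Psi !rowDZ !omulDr !omulZr.
by apply/rowP => k; rewrite !mxE; ring.
Qed.

HB.instance Definition _ (I J : oct R) :=
  GRing.isLinear.Build R 'M[R]_(4, 8) (oct R) *:%R (Psi I J) (Psi_lin I J).

Lemma pd_fI (D : set (R * R)) (G : 'cV[R]_4 -> 'M[R]_(4, 8)) f (I J : oct R) x (a : 'I_4) :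
  open D -> induces D G f -> Npairs I J -> Eset D x -> differentiable G x ->
  pd a (fI I J f) x = Psi I J (pd a G x).
Proof.
move=> Do hf hN Ex dx; rewrite /pd.
have -> : 'D_(e4 R a) (fI I J f) x = 'D_(e4 R a) (Psi I J \o G) x.
  apply: near_eq_derive; have := Eset_nbhs Do Ex; apply: filterS => w Ew /=.
  by rewrite /fI hf.
exact: (D_lin (Psi I J : {linear 'M[R]_(4,8) -> oct R})).
Qed.

Lemma DbarE (D : set (R * R)) (G : 'cV[R]_4 -> 'M[R]_(4, 8)) f (I J : oct R) x :
  open D -> induces D G f -> Npairs I J -> Eset D x -> differentiable G x ->
  Dbar I J f x = Psi I J (pd i0 G x) + omul I (Psi I J (pd i1 G x)) + omul J (Psi I J (pd i2 G x))
     + omul (omul I J) (Psi I J (pd i3 G x)).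
Proof. by move=> Do hf hN Ex dx; rewrite /Dbar !(pd_fI _ Do hf hN Ex dx). Qed.

Lemma rowB (c s1 s2 s3 : R) (b : 'I_4) (M : 'M[R]_(4,8)) :
  row b (c *: (Bs s1 s2 s3 *m M)) = (c * sg s1 s2 s3 b) *: row b M.
Proof. by apply/rowP => k; rewrite mxE [LHS]mxE BsE !mxE mulrA. Qed.

Lemma sg0 s1 s2 s3 : sg s1 s2 s3 i0 = 1 :> R. Proof. by []. Qed.
Lemma sg1 s1 s2 s3 : sg s1 s2 s3 i1 = s1 :> R. Proof. by []. Qed.
Lemma sg2' s1 s2 s3 : sg s1 s2 s3 i2 = s2 :> R. Proof. by []. Qed.
Lemma sg3 s1 s2 s3 : sg s1 s2 s3 i3 = s3 :> R. Proof. by []. Qed.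

Definition Dsig (I J : oct R) (P : 'I_4 -> 'M[R]_(4, 8)) (s1 s2 s3 : R) : oct R :=
  let K := omul I J in
  (row i0 (P i0) + omul I (omul I (row i1 (P i1))) + omul J (omul J (row i2 (P i2))) + omul K (omul K (row i3 (P i3))))
  + s1 *: (omul I (row i1 (P i0)) + omul I (row i0 (P i1)))
  + s2 *: (omul J (row i2 (P i0)) + omul J (row i0 (P i2)))
  + s3 *: (omul K (row i3 (P i0)) + omul K (row i0 (P i3)))
  + (s2 * s3) *: (omul J (omul K (row i3 (P i2))) + omul K (omul J (row i2 (P i3))))
  + (s1 * s3) *: (omul I (omul K (row i3 (P i1))) + omul K (omul I (row i1 (P i3))))
  + (s1 * s2) *: (omul I (omul J (row i2 (P i1))) + omul J (omul I (row i1 (P i2)))).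

Lemma Dsig_gen (I J : oct R) (P : 'I_4 -> 'M[R]_(4, 8)) s1 s2 s3 :
  sgok s1 -> sgok s2 -> sgok s3 ->
  Psi I J (sg s1 s2 s3 i0 *: (Bs s1 s2 s3 *m P i0))
  + omul I (Psi I J (sg s1 s2 s3 i1 *: (Bs s1 s2 s3 *m P i1)))
  + omul J (Psi I J (sg s1 s2 s3 i2 *: (Bs s1 s2 s3 *m P i2)))
  + omul (omul I J) (Psi I J (sg s1 s2 s3 i3 *: (Bs s1 s2 s3 *m P i3)))
  = Dsig I J P s1 s2 s3.
Proof.
rewrite /Psi !rowB !sg0 !sg1 !sg2' !sg3 !omulDr !omulZr.
rewrite /sgok /Dsig !mul1r => -> -> ->.
by apply/rowP => k; rewrite !mxE; ring.
Qed.

Lemma Dbar_B (D : set (R * R)) (G : 'cV[R]_4 -> 'M[R]_(4, 8)) f (I J : oct R) s1 s2 s3 v :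
  open D -> stem_fun D G -> C1_on D G -> induces D G f -> Npairs I J ->
  sgok s1 -> sgok s2 -> sgok s3 -> Eset D v ->
  Dbar I J f (Bs s1 s2 s3 *m v) = Dsig I J (fun a => pd a G v) s1 s2 s3.
Proof.
move=> Do hG [dG _] hf hN h1 h2 h3 Ev.
have EB : Eset D (Bs s1 s2 s3 *m v) by rewrite Eset_Bs.
rewrite (DbarE Do hf hN EB (dG _ EB)).
rewrite !(pdB _ Do hG h1 h2 h3 Ev (dG _ Ev) (dG _ EB)).
exact: (Dsig_gen I J (fun a => pd a G v) h1 h2 h3).
Qed.

End Main.


Section Fin.
Variable R : realType.

Lemma sgok1 : sgok (1 : R). Proof. by rewrite /sgok mulr1. Qed.
Lemma sgokN1 : sgok (-1 : R). Proof. by rewrite /sgok mulrNN mulr1. Qed.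

Lemma Bs1 : Bs 1 1 1 = 1%:M :> 'M[R]_4.
Proof.
apply/matrixP => i j; rewrite /Bs !mxE.
by case: i => [[|[|[|[|//]]]] Hi]; rewrite /sg /=.
Qed.

Lemma solve8 (g0 g1 g2 g3 h1 h2 h3 : oct R) :
  (forall s1 s2 s3, sgok s1 -> sgok s2 -> sgok s3 ->
     g0 + s1 *: g1 + s2 *: g2 + s3 *: g3 + (s2 * s3) *: h1 + (s1 * s3) *: h2 + (s1 * s2) *: h3 = 0) ->
  [/\ g0 = 0, g1 = 0, g2 = 0, g3 = 0 & [/\ h1 = 0, h2 = 0 & h3 = 0]].
Proof.
move=> H.
have e1 := H _ _ _ sgok1 sgok1 sgok1.
have e2 := H _ _ _ sgokN1 sgok1 sgok1.
have e3 := H _ _ _ sgok1 sgokN1 sgok1.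
have e4 := H _ _ _ sgok1 sgok1 sgokN1.
have e5 := H _ _ _ sgokN1 sgokN1 sgok1.
have e6 := H _ _ _ sgokN1 sgok1 sgokN1.
have e7 := H _ _ _ sgok1 sgokN1 sgokN1.
have e8 := H _ _ _ sgokN1 sgokN1 sgokN1.
split; [| | | |split]; apply/rowP => k;
  move/rowP/(_ k): e1; move/rowP/(_ k): e2; move/rowP/(_ k): e3; move/rowP/(_ k): e4;
  move/rowP/(_ k): e5; move/rowP/(_ k): e6; move/rowP/(_ k): e7; move/rowP/(_ k): e8;
  rewrite !mxE; lra.
Qed.

Lemma Dsig_groups (I J : oct R) (P : 'I_4 -> 'M[R]_(4, 8)) :
  (forall s1 s2 s3, sgok s1 -> sgok s2 -> sgok s3 -> Dsig I J P s1 s2 s3 = 0) ->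
  let K := omul I J in
  [/\ row i0 (P i0) + omul I (omul I (row i1 (P i1))) + omul J (omul J (row i2 (P i2))) + omul K (omul K (row i3 (P i3))) = 0,
      omul I (row i1 (P i0)) + omul I (row i0 (P i1)) = 0,
      omul J (row i2 (P i0)) + omul J (row i0 (P i2)) = 0,
      omul K (row i3 (P i0)) + omul K (row i0 (P i3)) = 0 &
   [/\ omul J (omul K (row i3 (P i2))) + omul K (omul J (row i2 (P i3))) = 0,
      omul I (omul K (row i3 (P i1))) + omul K (omul I (row i1 (P i3))) = 0 &
      omul I (omul J (row i2 (P i1))) + omul J (omul I (row i1 (P i2))) = 0]].
Proof. by move=> H K; apply: solve8 => s1 s2 s3 h1 h2 h3; exact: H. Qed.


Lemma groups_fueter (I J : oct R) (P : 'I_4 -> 'M[R]_(4, 8)) : Npairs I J ->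
  let K := omul I J in
  row i0 (P i0) + omul I (omul I (row i1 (P i1))) + omul J (omul J (row i2 (P i2))) + omul K (omul K (row i3 (P i3))) = 0 ->
  omul I (row i1 (P i0)) + omul I (row i0 (P i1)) = 0 ->
  omul J (row i2 (P i0)) + omul J (row i0 (P i2)) = 0 ->
  omul K (row i3 (P i0)) + omul K (row i0 (P i3)) = 0 ->
  omul J (omul K (row i3 (P i2))) + omul K (omul J (row i2 (P i3))) = 0 ->
  omul I (omul K (row i3 (P i1))) + omul K (omul I (row i1 (P i3))) = 0 ->
  omul I (omul J (row i2 (P i1))) + omul J (omul I (row i1 (P i2))) = 0 ->
  [/\ row i0 (P i0) - row i1 (P i1) - row i2 (P i2) - row i3 (P i3) = 0,
      row i0 (P i1) + row i1 (P i0) - row i2 (P i3) + row i3 (P i2) = 0,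
      row i0 (P i2) + row i1 (P i3) + row i2 (P i0) - row i3 (P i1) = 0 &
      row i0 (P i3) - row i1 (P i2) + row i2 (P i1) + row i3 (P i0) = 0].
Proof.
move=> hN K; have [II JJ KK [IJ IK JK]] := Nalg hN; rewrite -/K in KK IK JK.
move=> G0 G1 G2 G3 H1 H2 H3.
rewrite !LL // in G0.
move: G1; rewrite -omulDr => /(linj II) a1.
move: G2; rewrite -omulDr => /(linj JJ) a2.
move: G3; rewrite -omulDr => /(linj KK) a3.
move: H1; rewrite (anti _ JK) -omulNr -omulDr -omulNr -omulDr => /(linj JJ) /(linj KK) b1.
move: H2; rewrite (anti _ IK) -omulNr -omulDr -omulNr -omulDr => /(linj II) /(linj KK) b2.
move: H3; rewrite (anti _ IJ) -omulNr -omulDr -omulNr -omulDr => /(linj II) /(linj JJ) b3.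
split => //; apply/rowP => k;
  move/rowP/(_ k): a1; move/rowP/(_ k): a2; move/rowP/(_ k): a3;
  move/rowP/(_ k): b1; move/rowP/(_ k): b2; move/rowP/(_ k): b3;
  rewrite !mxE; lra.
Qed.

Lemma fuet_facts (P : 'I_4 -> 'M[R]_(4, 8)) :
  let d a b := row b (P a) in
  let d' a b := row b (sg (-1) (-1) (-1) a *: (Bs (-1) (-1) (-1) *m P a)) in
  d i1 i0 + d i0 i1 - d i3 i2 + d i2 i3 = 0 ->
  d i2 i0 + d i3 i1 + d i0 i2 - d i1 i3 = 0 ->
  d i3 i0 - d i2 i1 + d i1 i2 + d i0 i3 = 0 ->
  d' i1 i0 + d' i0 i1 - d' i3 i2 + d' i2 i3 = 0 ->
  d' i2 i0 + d' i3 i1 + d' i0 i2 - d' i1 i3 = 0 ->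
  d' i3 i0 - d' i2 i1 + d' i1 i2 + d' i0 i3 = 0 ->
  [/\ row i1 (P i0) + row i0 (P i1) = 0, row i2 (P i0) + row i0 (P i2) = 0,
      row i3 (P i0) + row i0 (P i3) = 0 &
   [/\ row i3 (P i2) = row i2 (P i3), row i3 (P i1) = row i1 (P i3) & row i2 (P i1) = row i1 (P i2)]].
Proof.
move=> d d' /= q2 q3 q4; rewrite /d' !rowB !sg0 !sg1 !sg2' !sg3 => r2 r3 r4.
split; [| | |split]; apply/rowP => k;
  move/rowP/(_ k): q2; move/rowP/(_ k): q3; move/rowP/(_ k): q4;
  move/rowP/(_ k): r2; move/rowP/(_ k): r3; move/rowP/(_ k): r4;
  rewrite /d !mxE; lra.
Qed.

Lemma Dbody_zero (I J : oct R) (m00 m01 m02 m03 m10 m11 m12 m13 m20 m21 m22 m23 m30 m31 m32 m33 : oct R) :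
  Npairs I J ->
  m00 - m11 - m22 - m33 = 0 ->
  m01 + m10 = 0 -> m02 + m20 = 0 -> m03 + m30 = 0 ->
  m23 = m32 -> m13 = m31 -> m12 = m21 ->
  let K := omul I J in
  (m00 + omul I (omul I m11) + omul J (omul J m22) + omul K (omul K m33))
  + 1 *: (omul I m01 + omul I m10)
  + 1 *: (omul J m02 + omul J m20)
  + 1 *: (omul K m03 + omul K m30)
  + (1 * 1) *: (omul J (omul K m23) + omul K (omul J m32))
  + (1 * 1) *: (omul I (omul K m13) + omul K (omul I m31))
  + (1 * 1) *: (omul I (omul J m12) + omul J (omul I m21)) = 0.
Proof.
move=> hN f0 a1 a2 a3 b1 b2 b3 K; have [II JJ KK [IJ IK JK]] := Nalg hN.
rewrite (LL m11 II) (LL m22 JJ) (LL m33 KK) f0.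
rewrite -(omulDr I) -(omulDr J) -(omulDr K) a1 a2 a3 !omul0r !scaler0 !addr0 add0r.
rewrite b1 b2 b3 (anti m32 JK) (anti m31 IK) (anti m21 IJ) !subrr !scaler0 !addr0 //.
Qed.

Lemma Dsig_zero (I J : oct R) (P : 'I_4 -> 'M[R]_(4, 8)) : Npairs I J ->
  row i0 (P i0) - row i1 (P i1) - row i2 (P i2) - row i3 (P i3) = 0 ->
  row i1 (P i0) + row i0 (P i1) = 0 -> row i2 (P i0) + row i0 (P i2) = 0 ->
  row i3 (P i0) + row i0 (P i3) = 0 ->
  row i3 (P i2) = row i2 (P i3) -> row i3 (P i1) = row i1 (P i3) -> row i2 (P i1) = row i1 (P i2) ->
  Dsig I J P 1 1 1 = 0.
Proof.
move=> hN f0 a1 a2 a3 b1 b2 b3.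
exact: (Dbody_zero hN f0 a1 a2 a3 b1 b2 b3).
Qed.

Definition Istd : oct R := mko (mkq 0 1 0 0) 0.
Definition Jstd : oct R := mko (mkq 0 0 1 0) 0.

Lemma cx_std (a b c d : R) n : (n < 8)%N -> cx (mko (mkq a b c d) 0) n = [:: a; b; c; d; 0; 0; 0; 0]`_n.
Proof.
case: n => [|[|[|[|[|[|[|[|//]]]]]]]] _; rewrite cx_mko //= ?mkqE //= mxE //.
Qed.

Lemma Nstd : Npairs Istd Jstd.
Proof.
have c1 : cx Istd 0 = 0 by rewrite /Istd cx_std.
have c2 : cx Jstd 0 = 0 by rewrite /Jstd cx_std.
split; [apply: sq_unit => //| split; [apply: sq_unit => //|]];
  rewrite odotE /Istd /Jstd !cx_std //=; ring.
Qed.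

End Fin.

End Aux.
Import Aux.

Theorem mainTheorem9 (R : realType) (D : set (R * R))
  (D_open : open D) (D_ne : D !=set0)
  (D_sym : forall a b, D (a, b) -> D (a, - b))
  (Om_conn : connected (OmegaD D))
  (F : 'cV[R]_4 -> 'M[R]_(4, 8)) (f : oct R -> oct R)
  (hF : stem_fun D F) (hC1 : C1_on D F) (hf : induces D F f) :
  slice_fueter_regular D f <->
  exists I J : oct R, Npairs I J /\
    (forall v : 'cV[R]_4, OmegaD D (emb I J v) -> Dbar I J f v = 0).
Proof.
split.
- move=> [G [hG [hCG [hfG hfu]]]].
  exists (Istd R), (Jstd R); split; first exact: Nstd.
  move=> v Ov; have hN := Nstd R.
  have Ev := Omega_emb D_sym hN Ov.
  have h1 := sgokN1 R.
  have EB : Eset D (Bs (-1) (-1) (-1) *m v) by rewrite Eset_Bs.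
  have [dG _] := hCG.
  have /= [_ [q2 [q3 q4]]] := hfu v Ev.
  have /= [f0 _] := hfu v Ev.
  have /= [_ [r2 [r3 r4]]] := hfu _ EB.
  move: r2 r3 r4; rewrite !(pdB _ D_open hG h1 h1 h1 Ev (dG _ Ev) (dG _ EB)) => r2 r3 r4.
  have [a1 a2 a3 [b1 b2 b3]] := fuet_facts (P := fun a => pd a G v) q2 q3 q4 r2 r3 r4.
  rewrite -[v]mul1mx -Bs1 (Dbar_B D_open hG hCG hfG hN (sgok1 R) (sgok1 R) (sgok1 R) Ev).
  exact: (Dsig_zero (P := fun a => pd a G v) hN f0 a1 a2 a3 b1 b2 b3).
- move=> [I [J [hN HD]]].
  exists F; split => //; split => //; split => //.
  move=> v Ev /=.
  have Hs : forall s1 s2 s3, sgok s1 -> sgok s2 -> sgok s3 -> Dsig I J (fun a => pd a F v) s1 s2 s3 = 0.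
    move=> s1 s2 s3 h1 h2 h3.
    rewrite -(Dbar_B D_open hF hC1 hf hN h1 h2 h3 Ev); apply: HD.
    by apply: emb_Omega => //; rewrite Eset_Bs.
  have [G0 G1 G2 G3 [H1 H2 H3]] := Dsig_groups Hs.
  have [e1 e2 e3 e4] := groups_fueter (P := fun a => pd a F v) hN G0 G1 G2 G3 H1 H2 H3.
  by split; [exact: e1|split; [exact: e2|split; [exact: e3|exact: e4]]].
Qed.
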